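(* For every $\varepsilon>0$, positive integer $t$, threshold $\theta\in\mathbb{R}$ and finite sequence $Q$ of counting queries, ImprovedSVT$(\cdot,Q,\theta,\lambda,t)$ (described below) satisfies $\varepsilon$-differential privacy whenever $\lambda\ge 2/\varepsilon$.
   Context: $\mathrm{Lap}(\lambda)$ is the Laplace distribution with density $\frac{1}{2\lambda}e^{-|y|/\lambda}$. A dataset is a finite multiset of tuples; two datasets are neighboring if one is obtained by inserting one tuple into the other. A counting query $q$ maps a dataset to the number of its tuples satisfying some predicate (so if $D$ is $D'$ plus one tuple then $q(D')\le q(D)\le q(D')+1$). ImprovedSVT$(D,Q=(q_1,q_2,\dots),\theta,\lambda,t)$: set $cnt=0$; draw $\hat\theta=\theta+\mathrm{Lap}(\lambda)$ once; for $i=1,2,\dots$: draw $\hat q_i(D)=q_i(D)+\mathrm{Lap}(t\lambda)$ (all noises independent); if $\hat q_i(D)>\hat\theta$, output $o_i=1$, increase $cnt$ by one, and stop if $cnt\ge t$; otherwise output $o_i=0$. The algorithm also stops when $Q$ is exhausted. The output is the sequence $(o_1,o_2,\dots)$ produced. An algorithm $\mathcal{A}$ is $\varepsilon$-differentially private if for all neighboring $D,D'$ and all outputs $O$, $\Pr[\mathcal{A}(D)=O]\le e^{\varepsilon}\Pr[\mathcal{A}(D')=O]$. *)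

(* Defs.v *)
From Stdlib Require Import Reals Lra List Permutation.
Open Scope R_scope.

Definition lap_pdf (b y : R) : R := / (2 * b) * exp (- Rabs y / b).

(* Pr[Lap(b) > x] = \int_x^oo lap_pdf b (closed form). *)
Definition lap_tail (b x : R) : R :=
  if Rlt_dec x 0 then 1 - exp (x / b) / 2 else exp (- x / b) / 2.

Definition improper_integral (f : R -> R) (l : R) : Prop :=
  forall e, 0 < e -> exists M, forall a b, a <= - M -> M <= b ->
    exists pr : Riemann_integrable f a b, Rabs (RiemannInt pr - l) < e.

(* Probability that ImprovedSVT produces exactly the output sequence [o],
   conditioned on the noisy threshold being [x]; [qs] are the true query
   answers q_i(D), [c] is the current counter. *)
Fixpoint svt_cond_prob (t : nat) (lam : R) (qs : list R) (x : R) (c : nat)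
  (o : list bool) : R :=
  match qs, o with
  | nil, nil => 1
  | nil, cons _ _ => 0
  | cons _ _, nil => 0
  | cons q qs', cons b o' =>
      let p1 := lap_tail (INR t * lam) (x - q) in
      if b then
        p1 * (if Nat.leb t (S c) then
                (match o' with nil => 1 | cons _ _ => 0 end)
              else svt_cond_prob t lam qs' x (S c) o')
      else (1 - p1) * svt_cond_prob t lam qs' x c o'
  end.

(* Datasets: finite multisets of tuples of type T, represented as lists. *)
Definition neighboring {T : Type} (D D' : list T) : Prop :=
  (exists x, Permutation D (x :: D')) \/ (exists x, Permutation D' (x :: D)).

Definition counting_query {T : Type} (p : T -> bool) (D : list T) : R :=
  INR (length (filter p D)).

(* [pr] is Pr[ImprovedSVT(D,Q,theta,lam,t) = o]: integrate over the threshold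
   noise z ~ Lap(lam), hat theta = theta + z. *)
Definition svt_prob {T : Type} (D : list T) (Q : list (T -> bool))
  (theta lam : R) (t : nat) (o : list bool) (pr : R) : Prop :=
  improper_integral
    (fun z => lap_pdf lam z *
       svt_cond_prob t lam (map (fun p => counting_query p D) Q) (theta + z) 0 o)
    pr.

Definition svt_dp {T : Type} (Q : list (T -> bool)) (theta lam : R) (t : nat)
  (eps : R) : Prop :=
  forall D D' : list T, neighboring D D' -> forall o : list bool,
    exists p1 p2, svt_prob D Q theta lam t o p1 /\ svt_prob D' Q theta lam t o p2
      /\ p1 <= exp eps * p2.

(* Main.v *)
Require Import Defs.
From Stdlib Require Import Reals Lra Lia List Permutation Classical.
From Coquelicot Require Import Coquelicot.
Open Scope R_scope.

Lemma tail_formula b x : lap_tail b x =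
  / 2 + exp (- ((x + Rabs x) / 2) / b) / 2 - exp (((x - Rabs x) / 2) / b) / 2.
Proof.
  unfold lap_tail; destruct (Rlt_dec x 0).
  - rewrite Rabs_left by lra.
    assert (H: - ((x + - x) / 2) / b = 0) by (unfold Rdiv; ring). rewrite H.
    assert (H2: (x - - x) / 2 = x) by field. rewrite H2.
    rewrite exp_0; lra.
  - rewrite Rabs_right by lra.
    assert (H: (x - x) / 2 / b = 0) by (unfold Rdiv; ring). rewrite H.
    assert (H2: - ((x + x) / 2) = - x) by field. rewrite H2.
    rewrite exp_0; lra.
Qed.

Lemma tail_cont b x : continuous (lap_tail b) x.
Proof.
  apply (continuous_ext (fun x => / 2 + exp (- ((x + Rabs x) / 2) / b) / 2 - exp (((x - Rabs x) / 2) / b) / 2)).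
  { intros; symmetry; apply tail_formula. }
  apply (continuous_minus (V:=R_NormedModule)).
  apply (continuous_plus (V:=R_NormedModule)).
  apply continuous_const.
  unfold Rdiv. apply (continuous_mult (K:=R_AbsRing)). 2: apply continuous_const.
  apply continuous_exp_comp. apply (continuous_mult (K:=R_AbsRing)). 2: apply continuous_const.
  apply (continuous_opp (V:=R_NormedModule)). apply (continuous_mult (K:=R_AbsRing)). 2: apply continuous_const.
  apply (continuous_plus (V:=R_NormedModule)). apply continuous_id. apply continuous_Rabs_comp, continuous_id.
  unfold Rdiv. apply (continuous_mult (K:=R_AbsRing)). 2: apply continuous_const.
  apply continuous_exp_comp. apply (continuous_mult (K:=R_AbsRing)). 2: apply continuous_const.
  apply (continuous_mult (K:=R_AbsRing)). 2: apply continuous_const.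
  apply (continuous_minus (V:=R_NormedModule)). apply continuous_id. apply continuous_Rabs_comp, continuous_id.
Qed.
Lemma Rmult_le_0_r a c : a <= 0 -> 0 <= c -> a * c <= 0.
Proof. intros; nra. Qed.

Lemma exp_le_mono a c : a <= c -> exp a <= exp c.
Proof. intros H; destruct (Req_dec a c). subst; lra. left; apply exp_increasing; lra. Qed.

Lemma exp_ge1 a : 0 <= a -> 1 <= exp a.
Proof. intros; rewrite <- exp_0 at 1; apply exp_le_mono; lra. Qed.
Lemma exp_le1 a : a <= 0 -> exp a <= 1.
Proof. intros; rewrite <- exp_0; apply exp_le_mono; lra. Qed.

Lemma tail_bounds b x : 0 < b -> 0 <= lap_tail b x <= 1.
Proof.
  intros Hb; unfold lap_tail; destruct (Rlt_dec x 0).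
  - assert (exp (x / b) <= 1). { rewrite <- exp_0; apply exp_le_mono.
      unfold Rdiv; apply Rmult_le_0_r; [lra| left; apply Rinv_0_lt_compat; lra]. }
    pose proof (exp_pos (x/b)); lra.
  - assert (exp (- x / b) <= 1). { rewrite <- exp_0; apply exp_le_mono.
      unfold Rdiv; apply Rmult_le_0_r; [lra| left; apply Rinv_0_lt_compat; lra]. }
    pose proof (exp_pos (-x/b)); lra.
Qed.

Lemma div_mono b u v : 0 < b -> u <= v -> u / b <= v / b.
Proof. intros; unfold Rdiv; apply Rmult_le_compat_r; [left; apply Rinv_0_lt_compat|]; lra. Qed.

Lemma tail_dec b x y : 0 < b -> x <= y -> lap_tail b y <= lap_tail b x.
Proof.
  intros Hb Hxy; unfold lap_tail; destruct (Rlt_dec x 0), (Rlt_dec y 0).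
  - assert (exp (x/b) <= exp (y/b)) by (apply exp_le_mono, div_mono; lra). lra.
  - assert (exp (x / b) <= 1). { rewrite <- exp_0; apply exp_le_mono.
      unfold Rdiv; apply Rmult_le_0_r; [lra| left; apply Rinv_0_lt_compat; lra]. }
    assert (exp (- y / b) <= 1). { rewrite <- exp_0; apply exp_le_mono.
      unfold Rdiv; apply Rmult_le_0_r; [lra| left; apply Rinv_0_lt_compat; lra]. }
    lra.
  - lra.
  - assert (exp (-y/b) <= exp (-x/b)) by (apply exp_le_mono, div_mono; lra). lra.
Qed.

Lemma tail_shift b y : 0 < b -> lap_tail b (y - 1) <= exp (1 / b) * lap_tail b y.
Proof.
  intros Hb. set (K := exp (1/b)).
  assert (HK : 1 <= K). { unfold K; apply exp_ge1.
    left; apply Rdiv_lt_0_compat; lra. }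
  unfold lap_tail; destruct (Rlt_dec (y-1) 0), (Rlt_dec y 0).
  - set (u := exp (y/b)).
    assert (Hu : 0 < u <= 1). { split. apply exp_pos. unfold u; apply exp_le1.
      unfold Rdiv; apply Rmult_le_0_r; [lra| left; apply Rinv_0_lt_compat; lra]. }
    assert (E : exp ((y - 1) / b) * K = u).
    { unfold K, u; rewrite <- exp_plus; f_equal; field; lra. }
    assert (Hp: 0 <= (K - 1) * (K - 1)) by nra.
    nra.
  - set (v := exp ((1 - y) / b)).
    assert (Hv : 1 <= v). { unfold v; apply exp_ge1.
      unfold Rdiv; apply Rmult_le_pos; [lra| left; apply Rinv_0_lt_compat; lra]. }
    assert (E1 : exp ((y - 1) / b) * v = 1).
    { unfold v; rewrite <- exp_plus, <- exp_0; f_equal; field; lra. }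
    assert (E2 : K * exp (- y / b) = v).
    { unfold K, v; rewrite <- exp_plus; f_equal; field; lra. }
    assert (Hp: 0 <= (v - 1) * (v - 1)) by nra.
    nra.
  - lra.
  - assert (E2 : K * exp (- y / b) = exp (- (y - 1) / b)).
    { unfold K; rewrite <- exp_plus; f_equal; field; lra. }
    lra.
Qed.

Lemma cond_bounds t lam qs : 0 < INR t * lam -> forall x c o,
  0 <= svt_cond_prob t lam qs x c o <= 1.
Proof.
  intros Hb; induction qs as [|q qs IH]; intros x c o; destruct o as [|bb o]; simpl; try lra.
  pose proof (tail_bounds (INR t * lam) (x - q) Hb).
  destruct bb.
  - destruct (Nat.leb t (S c)).
    + destruct o; nra.
    + specialize (IH x (S c) o); nra.
  - specialize (IH x c o); nra.
Qed.

Lemma cond_cont t lam qs : forall c o x, continuous (fun x => svt_cond_prob t lam qs x c o) x.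
Proof.
  assert (HT : forall q x, continuous (fun x => lap_tail (INR t * lam) (x - q)) x).
  { intros q x. apply (continuous_comp (fun x => x - q) (lap_tail (INR t * lam))).
    apply (continuous_minus (V:=R_NormedModule)). apply continuous_id. apply continuous_const.
    apply tail_cont. }
  induction qs as [|q qs IH]; intros c o x; destruct o as [|bb o]; simpl;
    try apply continuous_const.
  destruct bb.
  - destruct (Nat.leb t (S c)).
    + apply (continuous_mult (K:=R_AbsRing)). apply HT. apply continuous_const.
    + apply (continuous_mult (K:=R_AbsRing)). apply HT. apply IH.
  - apply (continuous_mult (K:=R_AbsRing)). 2: apply IH.
    apply (continuous_minus (V:=R_NormedModule)). apply continuous_const. apply HT.
Qed.

Lemma cond_cmp t lam x y K : 0 < INR t * lam -> 1 <= K ->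
  forall qs1 qs2, Forall2 (fun q1 q2 =>
     lap_tail (INR t * lam) (x - q1) <= K * lap_tail (INR t * lam) (y - q2) /\
     lap_tail (INR t * lam) (y - q2) <= lap_tail (INR t * lam) (x - q1)) qs1 qs2 ->
  forall c o, (c < t)%nat ->
  svt_cond_prob t lam qs1 x c o <= K ^ (t - c) * svt_cond_prob t lam qs2 y c o.
Proof.
  intros Hb HK qs1 qs2 HF; induction HF as [|q1 q2 qs1 qs2 [H1 H2] HF IH]; intros c o Hc.
  - destruct o; simpl.
    + rewrite Rmult_1_r; apply pow_R1_Rle; lra.
    + lra.
  - destruct o as [|bb o]; simpl; [lra|].
    pose proof (tail_bounds (INR t * lam) (x - q1) Hb).
    pose proof (tail_bounds (INR t * lam) (y - q2) Hb).
    assert (Ek : K ^ (t - c) = K * K ^ (t - S c)).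
    { replace (t - c)%nat with (S (t - S c)) by lia. reflexivity. }
    assert (Hk1 : 1 <= K ^ (t - S c)) by (apply pow_R1_Rle; lra).
    destruct bb.
    + destruct (Nat.leb t (S c)) eqn:E.
      * rewrite Ek. destruct o; nra.
      * apply Nat.leb_gt in E.
        specialize (IH (S c) o E).
        pose proof (cond_bounds t lam qs1 Hb x (S c) o).
        pose proof (cond_bounds t lam qs2 Hb y (S c) o).
        rewrite Ek.
        apply Rle_trans with (lap_tail (INR t * lam) (x - q1) * (K ^ (t - S c) * svt_cond_prob t lam qs2 y (S c) o)).
        { apply Rmult_le_compat_l; lra. }
        assert (0 <= K ^ (t - S c) * svt_cond_prob t lam qs2 y (S c) o) by nra.
        nra.
    + specialize (IH c o Hc).
      pose proof (cond_bounds t lam qs1 Hb x c o).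
      pose proof (cond_bounds t lam qs2 Hb y c o).
      assert (1 <= K ^ (t - c)) by (apply pow_R1_Rle; lra).
      apply Rle_trans with ((1 - lap_tail (INR t * lam) (x - q1)) * (K ^ (t - c) * svt_cond_prob t lam qs2 y c o)).
      { apply Rmult_le_compat_l; lra. }
      assert (0 <= K ^ (t - c) * svt_cond_prob t lam qs2 y c o) by nra.
      nra.
Qed.
Lemma shift_RInt (g : R -> R) s a b : ex_RInt g (a + s) (b + s) ->
  ex_RInt (fun y => g (y + s)) a b /\ RInt (fun y => g (y + s)) a b = RInt g (a + s) (b + s).
Proof.
  intros H.
  assert (H' : ex_RInt g (1 * a + s) (1 * b + s)) by (rewrite !Rmult_1_l; exact H).
  assert (Ee : forall y, scal 1 (g (1 * y + s)) = g (y + s)).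
  { intros y. change (scal 1 (g (1 * y + s))) with (1 * g (1 * y + s)). rewrite !Rmult_1_l. reflexivity. }
  split.
  - eapply ex_RInt_ext; [|apply (ex_RInt_comp_lin g 1 s a b H')]. intros; apply Ee.
  - pose proof (RInt_comp_lin g 1 s a b H') as E. rewrite !Rmult_1_l in E.
    rewrite <- E. apply RInt_ext. intros. symmetry. apply Ee.
Qed.

Lemma imp_cmp f g l1 l2 C s : improper_integral f l1 -> improper_integral g l2 ->
  0 <= C -> (forall z, f z <= C * g (z + s)) -> l1 <= C * l2.
Proof.
  intros Hf Hg HC Hfg.
  apply Rnot_lt_le; intros Hlt.
  set (e := (l1 - C * l2) / (2 * (C + 1))).
  assert (He : 0 < e) by (unfold e; apply Rdiv_lt_0_compat; lra).
  destruct (Hf e He) as [M1 HM1]. destruct (Hg e He) as [M2 HM2].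
  set (R0 := Rabs M1 + Rabs M2 + Rabs s).
  pose proof (Rle_abs M1) as A1. pose proof (Rle_abs M2) as A2. pose proof (Rle_abs s) as A3.
  pose proof (Rle_abs (-M1)) as A4. pose proof (Rle_abs (-M2)) as A5. pose proof (Rle_abs (-s)) as A6.
  rewrite Rabs_Ropp in *.
  destruct (HM1 (- R0) R0) as [pr1 H1]; [unfold R0; lra| unfold R0; lra|].
  destruct (HM2 (- R0 + s) (R0 + s)) as [pr2 H2]; [unfold R0; lra| unfold R0; lra|].
  rewrite <- RInt_Reals in H1, H2.
  pose proof (ex_RInt_Reals_1 _ _ _ pr1) as X1.
  pose proof (ex_RInt_Reals_1 _ _ _ pr2) as X2.
  destruct (shift_RInt g s _ _ X2) as [X3 E3].
  assert (Hle : RInt f (- R0) R0 <= C * RInt g (- R0 + s) (R0 + s)).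
  { rewrite <- E3.
    assert (E4 : RInt (fun y => C * g (y+s)) (-R0) R0 = C * RInt (fun y => g(y+s)) (-R0) R0)
      by exact (RInt_scal (V:=R_CompleteNormedModule) (fun y => g (y + s)) (-R0) R0 C X3).
    rewrite <- E4.
    apply RInt_le.
    - unfold R0; lra.
    - exact X1.
    - exact (ex_RInt_scal (V:=R_NormedModule) _ _ _ C X3).
    - intros; apply Hfg. }
  apply Rabs_def2 in H1. apply Rabs_def2 in H2.
  assert (e * (2 * (C + 1)) = l1 - C * l2) by (unfold e; field; lra).
  nra.
Qed.
Lemma pdf_cont lam z : continuous (lap_pdf lam) z.
Proof.
  unfold lap_pdf.
  apply (continuous_mult (K:=R_AbsRing) (fun _ => / (2 * lam))). apply continuous_const.
  apply continuous_exp_comp. unfold Rdiv.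
  apply (continuous_mult (K:=R_AbsRing)). 2: apply continuous_const.
  apply (continuous_opp (V:=R_NormedModule)). apply continuous_Rabs_comp, continuous_id.
Qed.

Lemma pdf_pos lam z : 0 < lam -> 0 < lap_pdf lam z.
Proof. intros; unfold lap_pdf; apply Rmult_lt_0_compat; [apply Rinv_0_lt_compat; lra| apply exp_pos]. Qed.

Lemma pdf_half_pos lam N : 0 < lam -> 0 <= N ->
  is_RInt (lap_pdf lam) 0 N (/ 2 - exp (- N / lam) / 2).
Proof.
  intros Hl HN.
  assert (E : / 2 - exp (- N / lam) / 2 = minus ((fun z => - exp (- z / lam) / 2) N) ((fun z => - exp (- z / lam) / 2) 0)).
  { simpl. unfold minus, plus, opp; simpl. replace (- 0 / lam) with 0 by (unfold Rdiv; ring). rewrite exp_0. field. }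
  rewrite E. apply (is_RInt_derive (fun z => - exp (- z / lam) / 2) (lap_pdf lam)).
  - intros x Hx. rewrite Rmin_left, Rmax_right in Hx by lra.
    unfold lap_pdf. rewrite Rabs_right by lra.
    auto_derive; [auto|]. unfold Rdiv; rewrite Rinv_mult; ring.
  - intros; apply pdf_cont.
Qed.

Lemma pdf_half_neg lam N : 0 < lam -> 0 <= N ->
  is_RInt (lap_pdf lam) (- N) 0 (/ 2 - exp (- N / lam) / 2).
Proof.
  intros Hl HN.
  assert (E : / 2 - exp (- N / lam) / 2 = minus ((fun z => exp (z / lam) / 2) 0) ((fun z => exp (z / lam) / 2) (- N))).
  { simpl. unfold minus, plus, opp; simpl. replace (0 / lam) with 0 by (unfold Rdiv; ring). rewrite exp_0. field. }
  rewrite E. apply (is_RInt_derive (fun z => exp (z / lam) / 2) (lap_pdf lam)).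
  - intros x Hx. rewrite Rmin_left, Rmax_right in Hx by lra.
    unfold lap_pdf. rewrite Rabs_left1 by lra.
    auto_derive; [auto|]. replace (- - x) with x by ring. unfold Rdiv; rewrite Rinv_mult; ring.
  - intros; apply pdf_cont.
Qed.

Lemma pdf_int_le1 lam N : 0 < lam -> 0 <= N -> RInt (lap_pdf lam) (- N) N <= 1.
Proof.
  intros Hl HN.
  pose proof (pdf_half_pos lam N Hl HN) as P. pose proof (pdf_half_neg lam N Hl HN) as Q.
  assert (E : RInt (lap_pdf lam) (- N) N = RInt (lap_pdf lam) (- N) 0 + RInt (lap_pdf lam) 0 N).
  { symmetry. exact (RInt_Chasles (V:=R_CompleteNormedModule) _ _ _ _ (ex_intro _ _ Q) (ex_intro _ _ P)). }
  rewrite E, (is_RInt_unique _ _ _ _ P), (is_RInt_unique _ _ _ _ Q).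
  pose proof (exp_pos (- N / lam)). lra.
Qed.

Lemma imp_exists lam (g : R -> R) : 0 < lam -> (forall z, continuous g z) ->
  (forall z, 0 <= g z <= 1) ->
  exists l, improper_integral (fun z => lap_pdf lam z * g z) l.
Proof.
  intros Hl Hc Hg. set (f := fun z => lap_pdf lam z * g z).
  assert (Xf : forall a b, ex_RInt f a b).
  { intros a b; apply (ex_RInt_continuous (V:=R_CompleteNormedModule)); intros z _.
    apply (continuous_mult (K:=R_AbsRing)). apply pdf_cont. apply Hc. }
  assert (Hf0 : forall z, 0 <= f z) by (intros z; unfold f; pose proof (pdf_pos lam z Hl); pose proof (Hg z); nra).
  assert (Pos : forall a b, a <= b -> 0 <= RInt f a b).
  { intros a b Hab; apply RInt_ge_0; auto. }
  assert (Ch : forall a b c, RInt f a c = RInt f a b + RInt f b c).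
  { intros a b c; symmetry; exact (RInt_Chasles (V:=R_CompleteNormedModule) f a b c (Xf a b) (Xf b c)). }
  assert (U : forall N, 0 <= N -> RInt f (- N) N <= 1).
  { intros N HN. eapply Rle_trans; [|apply (pdf_int_le1 lam N Hl HN)].
    apply RInt_le; auto; try lra.
    - apply (ex_RInt_continuous (V:=R_CompleteNormedModule)); intros; apply pdf_cont.
    - intros x _; unfold f; pose proof (pdf_pos lam x Hl); pose proof (Hg x); nra. }
  set (E := fun y => exists N, 0 <= N /\ y = RInt f (- N) N).
  assert (HE : bound E). { exists 1; intros y [N [HN ->]]; apply U; auto. }
  assert (HE2 : exists y, E y) by (exists (RInt f (-0) 0); exists 0; split; [lra|reflexivity]).
  destruct (completeness E HE HE2) as [l [Hub Hlub]].
  exists l. intros e He.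
  destruct (classic (exists N, 0 <= N /\ l - e < RInt f (- N) N)) as [[N0 [HN0 HN0']]|Hno].
  2:{ exfalso. assert (l <= l - e); [|lra]. apply Hlub. intros y [N [HN ->]].
      apply Rnot_lt_le; intros C; apply Hno; exists N; split; auto. }
  exists N0. intros a b Ha Hb.
  exists (ex_RInt_Reals_0 _ _ _ (Xf a b)). rewrite <- RInt_Reals.
  assert (L1 : l - e < RInt f a b).
  { rewrite (Ch a (- N0) b), (Ch (- N0) N0 b). pose proof (Pos a (- N0) Ha). pose proof (Pos N0 b Hb). lra. }
  set (N := Rmax (- a) b).
  assert (HNa : - a <= N) by apply Rmax_l. assert (HNb : b <= N) by apply Rmax_r.
  assert (L2 : RInt f a b <= l).
  { apply Rle_trans with (RInt f (- N) N).
    - rewrite (Ch (- N) a N), (Ch a b N). pose proof (Pos (- N) a ltac:(lra)). pose proof (Pos b N HNb). lra.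
    - apply Hub. exists N; split; [lra|reflexivity]. }
  apply Rabs_def1; lra.
Qed.

Lemma exp_pow_nat n a : exp a ^ n = exp (INR n * a).
Proof.
  induction n as [|n IH]; simpl. rewrite Rmult_0_l, exp_0; reflexivity.
  rewrite IH, <- exp_plus. f_equal. destruct n; simpl; ring.
Qed.

Lemma pdf_shift lam z : 0 < lam -> lap_pdf lam z <= exp (1 / lam) * lap_pdf lam (z + 1).
Proof.
  intros Hl; unfold lap_pdf.
  assert (Hi : 0 < / (2 * lam)) by (apply Rinv_0_lt_compat; lra).
  assert (E : exp (1 / lam) * exp (- Rabs (z + 1) / lam) = exp ((1 - Rabs (z + 1)) / lam)).
  { rewrite <- exp_plus; f_equal; field; lra. }
  assert (exp (- Rabs z / lam) <= exp ((1 - Rabs (z + 1)) / lam)).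
  { apply exp_le_mono, div_mono; auto. pose proof (Rabs_triang z 1). rewrite Rabs_R1 in H. lra. }
  nra.
Qed.

Lemma perm_filter_len {T : Type} (p : T -> bool) (l l' : list T) :
  Permutation l l' -> length (filter p l) = length (filter p l').
Proof.
  induction 1; simpl; auto.
  - destruct (p x); simpl; auto.
  - destruct (p x), (p y); simpl; auto.
  - congruence.
Qed.

Lemma count_perm {T : Type} (p : T -> bool) (D D' : list T) x :
  Permutation D (x :: D') ->
  counting_query p D = counting_query p D' + (if p x then 1 else 0).
Proof.
  intros HP; unfold counting_query. rewrite (perm_filter_len p _ _ HP). cbn [filter].
  destruct (p x); cbn [length]; [rewrite S_INR|]; ring.
Qed.

Lemma forall2_map {A : Type} (P : R -> R -> Prop) (F G : A -> R) (Q : list A) :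
  (forall a, P (F a) (G a)) -> Forall2 P (map F Q) (map G Q).
Proof. intros H; induction Q; simpl; constructor; auto. Qed.

Theorem lemma6 (T : Type) (eps : R) (t : nat) (theta lam : R)
  (Q : list (T -> bool)) :
  0 < eps -> (0 < t)%nat -> 2 / eps <= lam ->
  svt_dp Q theta lam t eps.
Proof.
  intros Heps Ht Hlam D D' Hn o.
  assert (Hl : 0 < lam). { assert (0 < 2 / eps) by (apply Rdiv_lt_0_compat; lra). lra. }
  assert (Htr : 1 <= INR t) by (apply (le_INR 1); lia).
  assert (Hb : 0 < INR t * lam) by nra.
  set (b := INR t * lam) in *.
  set (K := exp (1 / b)).
  assert (HK : 1 <= K) by (apply exp_ge1; left; apply Rdiv_lt_0_compat; lra).
  assert (HKt : K ^ t = exp (1 / lam)).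
  { unfold K; rewrite exp_pow_nat; f_equal; unfold b; field; lra. }
  assert (Hlam1 : 1 / lam <= eps / 2).
  { assert (2 / eps * eps = 2) by (field; lra). 
    apply Rmult_le_reg_r with (2 * lam); [lra|].
    replace (1 / lam * (2 * lam)) with 2 by (field; lra). nra. }
  assert (Hexp1 : exp (1 / lam) <= exp eps) by (apply exp_le_mono; lra).
  assert (Hexp2 : exp (1 / lam) * exp (1 / lam) <= exp eps).
  { rewrite <- exp_plus; apply exp_le_mono; lra. }
  set (gq := fun (DD : list T) => map (fun p => counting_query p DD) Q).
  assert (Ex : forall DD, exists l, svt_prob DD Q theta lam t o l).
  { intros DD. apply (imp_exists lam (fun z => svt_cond_prob t lam (gq DD) (theta + z) 0 o) Hl).
    - intros z. apply (continuous_comp (fun z => theta + z) (fun x => svt_cond_prob t lam (gq DD) x 0 o)).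
      apply (continuous_plus (V:=R_NormedModule)). apply continuous_const. apply continuous_id.
      apply cond_cont.
    - intros z; apply cond_bounds; auto. }
  destruct (Ex D) as [p1 H1]. destruct (Ex D') as [p2 H2].
  exists p1, p2. split; [exact H1|]. split; [exact H2|].
  assert (Hbd : forall DD x, 0 <= svt_cond_prob t lam (gq DD) x 0 o <= 1) by (intros; apply cond_bounds; auto).
  destruct Hn as [[x HP]|[x HP]].
  -
    apply (imp_cmp _ _ p1 p2 (exp eps) 0 H1 H2); [left; apply exp_pos|].
    intros z. cbv beta. fold (gq D) (gq D'). rewrite Rplus_0_r.
    assert (Hc : svt_cond_prob t lam (gq D) (theta + z) 0 o <= K ^ (t - 0) * svt_cond_prob t lam (gq D') (theta + z) 0 o).
    { apply cond_cmp; auto. unfold gq. apply forall2_map. intros p.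
      rewrite (count_perm p D D' x HP).
      set (X := theta + z). set (q := counting_query p D').
      assert (Hd : 0 <= (if p x then 1 else 0) <= 1) by (destruct (p x); lra).
      split.
      - apply Rle_trans with (lap_tail b (X - q - 1)).
        + apply tail_dec; auto; lra.
        + apply tail_shift; auto.
      - apply tail_dec; auto; lra. }
    rewrite Nat.sub_0_r, HKt in Hc.
    pose proof (pdf_pos lam z Hl). pose proof (Hbd D' (theta + z)).
    assert (0 <= svt_cond_prob t lam (gq D') (theta + z) 0 o * lap_pdf lam z) by nra.
    apply Rle_trans with (lap_pdf lam z * (exp (1 / lam) * svt_cond_prob t lam (gq D') (theta + z) 0 o)).
    + apply Rmult_le_compat_l; lra.
    + nra.
  -
    apply (imp_cmp _ _ p1 p2 (exp eps) 1 H1 H2); [left; apply exp_pos|].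
    intros z. cbv beta. fold (gq D) (gq D').
    assert (Hc : svt_cond_prob t lam (gq D) (theta + z) 0 o <= K ^ (t - 0) * svt_cond_prob t lam (gq D') (theta + (z + 1)) 0 o).
    { apply cond_cmp; auto. unfold gq. apply forall2_map. intros p.
      rewrite (count_perm p D' D x HP).
      set (X := theta + z). set (q := counting_query p D).
      assert (Hd : 0 <= (if p x then 1 else 0) <= 1) by (destruct (p x); lra).
      replace (theta + (z + 1)) with (X + 1) by (unfold X; ring).
      split.
      - apply Rle_trans with (lap_tail b (X + 1 - (q + (if p x then 1 else 0)) - 1)).
        + apply tail_dec; auto; lra.
        + apply tail_shift; auto.
      - apply tail_dec; auto; lra. }
    rewrite Nat.sub_0_r, HKt in Hc.
    pose proof (pdf_pos lam z Hl). pose proof (pdf_shift lam z Hl).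
    pose proof (pdf_pos lam (z + 1) Hl). pose proof (Hbd D' (theta + (z + 1))).
    pose proof (exp_pos (1 / lam)).
    set (G := svt_cond_prob t lam (gq D') (theta + (z + 1)) 0 o) in *.
    set (P0 := lap_pdf lam z) in *. set (P1 := lap_pdf lam (z + 1)) in *.
    set (E1 := exp (1 / lam)) in *.
    apply Rle_trans with (P0 * (E1 * G)).
    + apply Rmult_le_compat_l; lra.
    + apply Rle_trans with (E1 * P1 * (E1 * G)).
      * apply Rmult_le_compat_r; nra.
      * assert (0 <= P1 * G) by nra. nra.
Qed.
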